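(* Let $(\mathcal T_r)_{r\in\mathbb Z}$ be any generalized Tribonacci sequence. Then for every integer $r$ and every non-negative integer $k$: \[ 103\sum_{j=0}^k56^j\mathcal T_{r+16+17j}=56^{k+1}\mathcal T_{r+17k+17}-\mathcal T_r, \] \[ 56\sum_{j=0}^k(-1)^j103^j\mathcal T_{r+17+16j}=\mathcal T_r-(-103)^{k+1}\mathcal T_{r+16k+16}, \] \[ \sum_{j=0}^k103^{k-j}56^j\mathcal T_{r-16+j}=-103^{k+1}\mathcal T_r+56^{k+1}\mathcal T_{r+k+1}. \]
   Context: A generalized Tribonacci sequence is a two-sided sequence $(\mathcal T_r)_{r\in\mathbb Z}$ of complex numbers with $\mathcal T_r=\mathcal T_{r-1}+\mathcal T_{r-2}+\mathcal T_{r-3}$ for all $r\in\mathbb Z$. *)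

(* Defs.v *)
(* Complex numbers are modelled by an arbitrary
   numClosedFieldType (algebraically closed numeric field, e.g. algC);
   the identities are purely algebraic. *)
From HB Require Import structures.
From mathcomp Require Import all_boot all_order all_algebra.
Set Implicit Arguments. Unset Strict Implicit. Unset Printing Implicit Defensive.
Import Order.TTheory GRing.Theory Num.Theory.
Local Open Scope ring_scope.

Definition is_gen_tribonacci (C : numClosedFieldType) (T : int -> C) : Prop :=
  forall r : int, T r = T (r - 1) + T (r - 2) + T (r - 3).

(* Main.v *)
Require Import Defs.
From HB Require Import structures.
From mathcomp Require Import all_boot all_order all_algebra.
From mathcomp Require Import ring zify.
Import Order.TTheory GRing.Theory Num.Theory.
Local Open Scope ring_scope.

Definition tadd (x y z : nat * nat * nat) : nat * nat * nat :=
  (x.1.1 + y.1.1 + z.1.1, x.1.2 + y.1.2 + z.1.2, x.2 + y.2 + z.2)%N.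

Fixpoint cf3 (n : nat) : (nat * nat * nat) * (nat * nat * nat) * (nat * nat * nat) :=
  match n with
  | 0 => ((1, 0, 0), (0, 1, 0), (0, 0, 1))%N
  | m.+1 => let '(x, y, z) := cf3 m in (y, z, tadd x y z)
  end.

Definition coefs n := (cf3 n).1.1.

Section K.
Variables (C : numClosedFieldType) (T : int -> C).
Hypothesis hT : is_gen_tribonacci T.

Lemma recU (s : int) (n : nat) :
  T (s + (n.+3)%:Z) = T (s + n%:Z) + T (s + (n.+1)%:Z) + T (s + (n.+2)%:Z).
Proof.
rewrite hT.
have -> : s + (n.+3)%:Z - 1 = s + (n.+2)%:Z by lia.
have -> : s + (n.+3)%:Z - 2 = s + (n.+1)%:Z by lia.
have -> : s + (n.+3)%:Z - 3 = s + n%:Z by lia.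
ring.
Qed.

Lemma coefsP (s : int) (n : nat) :
  T (s + n%:Z) = (coefs n).1.1%:R * T s + (coefs n).1.2%:R * T (s + 1)
                 + (coefs n).2%:R * T (s + 2).
Proof.
rewrite /coefs.
suff H : forall m, [/\ T (s + m%:Z) = (cf3 m).1.1.1.1%:R * T s + (cf3 m).1.1.1.2%:R * T (s + 1)
                 + (cf3 m).1.1.2%:R * T (s + 2),
  T (s + (m.+1)%:Z) = (cf3 m).1.2.1.1%:R * T s + (cf3 m).1.2.1.2%:R * T (s + 1)
                 + (cf3 m).1.2.2%:R * T (s + 2) &
  T (s + (m.+2)%:Z) = (cf3 m).2.1.1%:R * T s + (cf3 m).2.1.2%:R * T (s + 1)
                 + (cf3 m).2.2%:R * T (s + 2)] by case: (H n).
elim=> [|p [H0 H1 H2]].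
  split => /=; rewrite ?addr0; ring.
move: H0 H1 H2; rewrite /=.
case: (cf3 p) => [[x y] z] /= H0 H1 H2.
split => //.
rewrite recU H0 H1 H2 /tadd /= !natrD; ring.
Qed.

Lemma key (s : int) : 103%:R * T (s + 16) = 56%:R * T (s + 17) - T s.
Proof.
have h16 := coefsP s 16; have h17 := coefsP s 17.
rewrite (_ : s + 16 = s + (16%N)%:Z) // (_ : s + 17 = s + (17%N)%:Z) // h16 h17.
rewrite /coefs /=.
ring.
Qed.

End K.

Theorem mainTheorem9 (C : numClosedFieldType) (T : int -> C)
  (hT : is_gen_tribonacci T) (r : int) (k : nat) :
  [/\ 103%:R * (\sum_(0 <= j < k.+1) 56%:R ^+ j * T (r + 16 + 17 * j%:Z))
        = 56%:R ^+ k.+1 * T (r + 17 * k%:Z + 17) - T r,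
      56%:R * (\sum_(0 <= j < k.+1) (-1) ^+ j * 103%:R ^+ j * T (r + 17 + 16 * j%:Z))
        = T r - (- 103%:R) ^+ k.+1 * T (r + 16 * k%:Z + 16)
    & \sum_(0 <= j < k.+1) 103%:R ^+ (k - j) * 56%:R ^+ j * T (r - 16 + j%:Z)
        = - 103%:R ^+ k.+1 * T r + 56%:R ^+ k.+1 * T (r + k%:Z + 1)].
Proof.
have K := @key C T hT.
split.
- elim: k => [|k IH].
    rewrite big_nat1 (_ : r + 16 + 17 * 0%:Z = r + 16); last by lia.
    rewrite (_ : r + 17 * 0%:Z + 17 = r + 17); last by lia.
    rewrite expr0 mul1r expr1 K; ring.
  rewrite big_nat_recr //= mulrDr IH.
  have := K (r + 17 * k%:Z + 17).
  rewrite (_ : r + 17 * k%:Z + 17 + 16 = r + 16 + 17 * (k.+1)%:Z); last by lia.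
  rewrite (_ : r + 17 * k%:Z + 17 + 17 = r + 17 * (k.+1)%:Z + 17); last by lia.
  move=> E; rewrite mulrCA E !exprS. ring.
- elim: k => [|k IH].
    rewrite big_nat1 (_ : r + 17 + 16 * 0%:Z = r + 17); last by lia.
    rewrite (_ : r + 16 * 0%:Z + 16 = r + 16); last by lia.
    have E : T (r + 17) = (103%:R * T (r + 16) + T r) / 56%:R.
      rewrite K; by field.
    rewrite E !expr0 !mul1r expr1; by field.
  rewrite big_nat_recr //= mulrDr IH.
  have := K (r + 16 * k%:Z + 16).
  rewrite (_ : r + 16 * k%:Z + 16 + 16 = r + 16 * (k.+1)%:Z + 16); last by lia.
  rewrite (_ : r + 16 * k%:Z + 16 + 17 = r + 17 + 16 * (k.+1)%:Z); last by lia.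
  move=> E.
  have E' : T (r + 17 + 16 * (k.+1)%:Z) = (103%:R * T (r + 16 * (k.+1)%:Z + 16) + T (r + 16 * k%:Z + 16)) / 56%:R.
    rewrite E; by field.
  have hN : (- 103%:R : C) ^+ k = (-1) ^+ k * 103%:R ^+ k by exact: exprNn.
  rewrite E' !exprS hN; by field.
- elim: k => [|k IH].
    rewrite big_nat1 subnn !expr0 !mul1r expr1 (_ : r - 16 + 0%:Z = r - 16); last by lia.
    rewrite (_ : r + 0%:Z + 1 = r + 1); last by lia.
    have := K (r - 16); rewrite (_ : r - 16 + 16 = r); last by lia.
    rewrite (_ : r - 16 + 17 = r + 1); last by lia.
    move=> E; rewrite mulNr E; ring.
  rewrite big_nat_recr //= subnn expr0 mul1r.
  rewrite (eq_big_nat _ _ (F2 := fun j => 103%:R * (103%:R ^+ (k - j) * 56%:R ^+ j * T (r - 16 + j%:Z)))); last first.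
    move=> i /andP [_ hi]; rewrite subSn // exprS; ring.
  rewrite -mulr_sumr IH.
  have := K (r - 16 + (k.+1)%:Z).
  rewrite (_ : r - 16 + (k.+1)%:Z + 16 = r + k%:Z + 1); last by lia.
  rewrite (_ : r - 16 + (k.+1)%:Z + 17 = r + (k.+1)%:Z + 1); last by lia.
  move=> E.
  have E' : T (r - 16 + (k.+1)%:Z) = 56%:R * T (r + (k.+1)%:Z + 1) - 103%:R * T (r + k%:Z + 1).
    rewrite E; ring.
  rewrite E' !exprS; ring.
Qed.
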